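(* Let $q\ge0$, let $(\varepsilon_t)_{t\in\mathbb Z}$ be i.i.d. real random variables with a continuous distribution, and let $X_t=\sum_{l=0}^q\varepsilon_{t-l}$ (MA($q$) process with equal weights). For OPs of length $m=2$, the long-run covariance matrix is $$\Sigma=\frac1{12}\begin{pmatrix}1&-1\\-1&1\end{pmatrix},$$ independently of $q$ and of the distribution of $\varepsilon_t$.
   Context: For $m=2$ the OPs are $\pi_1=(1,2)$ (i.e. $X_t<X_{t+1}$) and $\pi_2=(2,1)$ (i.e. $X_t>X_{t+1}$); $\Pi_t$ is the OP of $(X_t,X_{t+1})$, $p_i=\mathbb P(\Pi_0=\pi_i)$, $p_{ij}(k)=\mathbb P(\Pi_0=\pi_i,\Pi_k=\pi_j)$, and the long-run covariance matrix is $\Sigma=(\sigma_{ij})$ with $\sigma_{ij}=p_i(\delta_{ij}-p_j)+\sum_{k=1}^\infty\big(p_{ij}(k)+p_{ji}(k)-2p_ip_j\big)$, $\delta_{ij}$ the Kronecker delta. *)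

(* Defs.v *)
From HB Require Import structures.
From mathcomp Require Import all_boot all_order all_algebra.
From mathcomp Require Import all_classical all_reals all_analysis.
Set Implicit Arguments. Unset Strict Implicit. Unset Printing Implicit Defensive.
Import Order.TTheory GRing.Theory Num.Theory.
Local Open Scope classical_set_scope.
Local Open Scope ring_scope.

Section Defs.
Context (d : measure_display) (T : measurableType d) (R : realType)
  (P : probability T R).

Definition mutually_independent (eps : int -> {RV P >-> R}) : Prop :=
  forall (I : seq int) (B : int -> set R), uniq I ->
    (forall i, i \in I -> measurable (B i)) ->
    P (\bigcap_(i in [set` I]) (eps i @^-1` B i)) =
    (\prod_(i <- I) P (eps i @^-1` B i))%E.

Definition identically_distributed (eps : int -> {RV P >-> R}) : Prop :=
  forall (t : int) (B : set R), measurable B ->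
    P (eps t @^-1` B) = P (eps 0 @^-1` B).

Definition continuous_law (Y : {RV P >-> R}) : Prop :=
  forall x : R, P (Y @^-1` [set x]) = 0%E.

Definition iid_continuous (eps : int -> {RV P >-> R}) : Prop :=
  [/\ mutually_independent eps, identically_distributed eps &
      continuous_law (eps 0)].

Definition MAeq (eps : int -> {RV P >-> R}) (q : nat) (t : int) : T -> R :=
  fun w => \sum_(0 <= l < q.+1) eps (t - l%:Z) w.

(* Ordinal patterns of length 2: index 0 is pi_1 = (1,2) (X_t < X_{t+1}),
   index 1 is pi_2 = (2,1) (X_t > X_{t+1}).
   OPevent X t i = the event {Pi_t = pi_i}. *)
Definition OPevent (X : int -> T -> R) (t : int) (i : 'I_2) : set T :=
  if i == ord0 then [set w | X t w < X (t + 1) w]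
  else [set w | X (t + 1) w < X t w].

Definition p_ (X : int -> T -> R) (i : 'I_2) : R :=
  fine (P (OPevent X 0 i)).

Definition p2_ (X : int -> T -> R) (i j : 'I_2) (k : nat) : R :=
  fine (P (OPevent X 0 i `&` OPevent X k%:Z j)).

Definition sigma_partial (X : int -> T -> R) (i j : 'I_2) (n : nat) : R :=
  p_ X i * ((i == j)%:R - p_ X j) +
  \sum_(1 <= k < n.+1) (p2_ X i j k + p2_ X j i k - 2 * p_ X i * p_ X j).

End Defs.

Definition Sigma_claim (R : realType) (i j : 'I_2) : R :=
  (if i == j then 1 else -1) / 12.

(* Main.v *)
Require Import Defs.
From HB Require Import structures.
From mathcomp Require Import all_boot all_order all_algebra.
From mathcomp Require Import all_classical all_reals all_analysis.
From mathcomp Require Import ring lra zify.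
Import Order.TTheory GRing.Theory Num.Theory.
Local Open Scope classical_set_scope.
Local Open Scope ring_scope.

Lemma sigmaU (T : Type) (G : set (set T)) (A B : set T) :
  <<s G >> A -> <<s G >> B -> <<s G >> (A `|` B).
Proof.
move=> GA GB.
have -> : A `|` B = \bigcup_k (if k == 0%N then A else B).
  apply/seteqP; split => [x [Ax|Bx]|x [[|k] _ /= H]].
  - by exists 0%N.
  - by exists 1%N.
  - by left.
  - by right.
by apply: sigma_algebra_bigcup => -[|k].
Qed.

Section genprod.
Context d1 d2 (T1 : measurableType d1) (T2 : measurableType d2).
Variable G1 : set (set T1).
Hypothesis mG1 : @measurable _ T1 = <<s G1 >>.
Hypothesis G1T : G1 setT.

Definition rectG : set (set (T1 * T2)) :=
  [set C | exists A B, G1 A /\ measurable B /\ C = A `*` B].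

Lemma rectG_gen : @measurable _ (T1 * T2)%type = <<s rectG >>.
Proof.
rewrite measurable_prod_measurableType; apply/seteqP; split; last first.
  apply: (smallest_sub (smallest_sigma_algebra _ _)).
  move=> _ [A [B [GA [mB ->]]]]; apply: sub_sigma_algebra; exists A.
    by rewrite mG1; exact: sub_sigma_algebra.
  by exists B.
apply: (smallest_sub (smallest_sigma_algebra _ _)).
move=> _ [A mA] [B mB] <-.
pose F := [set C : set T1 | <<s rectG >> (C `*` B)].
have : <<s G1 >> `<=` F.
  apply: smallest_sub.
    split.
    - by rewrite /F /= set0X; exact: sigma_algebra0.
    - move=> C FC; rewrite /F /=.
      have -> : (setT `\` C) `*` B = (setT `*` B) `\` (C `*` B).
        apply/seteqP; split => [[x y] /= [[_ nC] By]|[x y] /= [[_ By] H]].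
          by split => // -[].
        by split => //; split => // Cx; apply: H.
      have -> : (setT `*` B) `\` (C `*` B) = ~` (~` (setT `*` B) `|` (C `*` B)).
        by rewrite setCU setCK setDE.
      apply: sigma_algebraC; apply: sigmaU => //; apply: sigma_algebraC.
      by apply: sub_sigma_algebra; exists setT, B.
    - move=> Cs FCs; rewrite /F /= setX_bigcupl; exact: sigma_algebra_bigcup.
  move=> C GC; apply: sub_sigma_algebra; exists C, B; split => //.
by rewrite -mG1; apply.
Qed.
End genprod.

Section produnique.
Context d1 d2 (T1 : measurableType d1) (T2 : measurableType d2) (R : realType).
Variable G1 : set (set T1).
Hypothesis mG1 : @measurable _ T1 = <<s G1 >>.
Hypothesis G1T : G1 setT.
Hypothesis G1I : setI_closed G1.


Lemma prod_unique (m1 m2 : {measure set (T1 * T2)%type -> \bar R}) :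
  (m1 setT < +oo)%E ->
  (forall A B, G1 A -> measurable B -> m1 (A `*` B) = m2 (A `*` B)) ->
  forall X, measurable X -> m1 X = m2 X.
Proof.
move=> m1T H X mX.
apply: (measure_unique (@rectG _ _ T1 T2 G1) (fun _ => setT)) => //.
- exact: (@rectG_gen _ _ T1 T2 G1).
- move=> _ _ [A [B [GA [mB ->]]]] [A' [B' [GA' [mB' ->]]]].
  exists (A `&` A'), (B `&` B'); split; first exact: G1I.
  by split; [exact: measurableI|rewrite setXI].
- by move=> _; exists setT, setT; rewrite setXTT.
- by rewrite bigcup_const.
- by move=> _ [A [B [GA [mB ->]]]]; exact: H.
Qed.
End produnique.

Lemma rectG_T d1 d2 (T1 : measurableType d1) (T2 : measurableType d2) (G1 : set (set T1)) :
  G1 setT -> @rectG _ _ T1 T2 G1 setT.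
Proof. by move=> G1T; exists setT, setT; rewrite setXTT. Qed.

Lemma rectG_I d1 d2 (T1 : measurableType d1) (T2 : measurableType d2) (G1 : set (set T1)) :
  setI_closed G1 -> setI_closed (@rectG _ _ T1 T2 G1).
Proof.
move=> G1I _ _ [A [B [GA [mB ->]]]] [A' [B' [GA' [mB' ->]]]].
exists (A `&` A'), (B `&` B'); split; first exact: G1I.
by split; [exact: measurableI|rewrite setXI].
Qed.

Lemma measG : forall d (T : measurableType d), @measurable _ T = <<s @measurable _ T >>.
Proof. by move=> d T; rewrite sigma_algebra_id //; exact: sigma_algebra_measurable. Qed.

Lemma bigcap_cons (I : eqType) (U : Type) (F : I -> set U) x s :
  \bigcap_(i in [set` x :: s]) F i = F x `&` \bigcap_(i in [set` s]) F i.
Proof.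
apply/seteqP; split => [u H|u [Fx H] i /=].
  split; first by apply: H; rewrite /= inE eqxx.
  by move=> i /= si; apply: H; rewrite /= inE si orbT.
by rewrite inE => /orP[/eqP->//|si]; exact: H.
Qed.

Lemma bigcap_nil (I : eqType) (U : Type) (F : I -> set U) :
  \bigcap_(i in [set` [::]]) F i = setT.
Proof. by apply/seteqP; split => // u _ i /=; rewrite in_nil. Qed.

Lemma mlt d' (U : measurableType d') (R : realType) (f g : U -> R) :
  measurable_fun setT f -> measurable_fun setT g -> measurable [set x | f x < g x].
Proof.
move=> mf mg.
have := measurable_realfun.measurable_fun_ltr mf mg measurableT (Y := [set true]) I.
by rewrite setTI.
Qed.

Lemma meq d' (U : measurableType d') (R : realType) (f g : U -> R) :
  measurable_fun setT f -> measurable_fun setT g -> measurable [set x | f x = g x].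
Proof.
move=> mf mg.
have := measurable_realfun.measurable_fun_eqr mf mg measurableT (Y := [set true]) I.
rewrite setTI; congr measurable; apply/seteqP; split => x /=; by move/eqP.
Qed.

Section prob.
Context (d : measure_display) (T : measurableType d) (R : realType)
  (P : probability T R) (eps : int -> {RV P >-> R}).
Hypothesis Hind : mutually_independent eps.
Hypothesis Hid : identically_distributed eps.
Hypothesis Hc : continuous_law (eps 0).

Local Notation mu := (distribution P (eps 0)).

Lemma prodL (s : seq int) (B : int -> set R) : uniq s ->
  (forall i, measurable (B i)) ->
  P (\bigcap_(i in [set` s]) eps i @^-1` B i) = (\prod_(i <- s) mu (B i))%E.
Proof. by move=> us mB; rewrite Hind //; apply: eq_bigr => i _; exact: Hid. Qed.

Definition v2 (a b : int) : T -> R * R := fun w => (eps a w, eps b w).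
Lemma mv2 a b : measurable_fun setT (v2 a b).
Proof. by apply: measurable_fun_pair. Qed.
HB.instance Definition _ a b := isMeasurableFun.Build _ _ _ _ (v2 a b) (mv2 a b).
Definition v3 (a b c : int) : T -> (R * R) * R := fun w => (v2 a b w, eps c w).
Lemma mv3 a b c : measurable_fun setT (v3 a b c).
Proof. by apply: measurable_fun_pair => //; exact: mv2. Qed.
HB.instance Definition _ a b c := isMeasurableFun.Build _ _ _ _ (v3 a b c) (mv3 a b c).
Definition v4 (a b c e : int) : T -> ((R * R) * R) * R := fun w => (v3 a b c w, eps e w).
Lemma mv4 a b c e : measurable_fun setT (v4 a b c e).
Proof. by apply: measurable_fun_pair => //; exact: mv3. Qed.
HB.instance Definition _ a b c e := isMeasurableFun.Build _ _ _ _ (v4 a b c e) (mv4 a b c e).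

Lemma rect2 a b A B : a != b -> measurable A -> measurable B ->
  distribution P (v2 a b) (A `*` B) = (mu A * mu B)%E.
Proof.
move=> ab mA mB.
pose S i := if i == a then A else B.
have -> : distribution P (v2 a b) (A `*` B) =
    P (\bigcap_(i in [set` [:: a; b]]) eps i @^-1` S i).
  rewrite /distribution /pushforward; congr (P _).
  rewrite !bigcap_cons bigcap_nil setIT /S eqxx eq_sym (negbTE ab).
  by apply/seteqP; split => w.
rewrite prodL /=; last 2 first.
- by rewrite inE ab.
- by move=> i; rewrite /S; case: ifP.
by rewrite !big_cons big_nil mule1 /S eqxx eq_sym (negbTE ab).
Qed.

Lemma rect3 a b c A B C : a != b -> a != c -> b != c ->
  measurable A -> measurable B -> measurable C ->
  distribution P (v3 a b c) (A `*` B `*` C) = (mu A * mu B * mu C)%E.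
Proof.
move=> ab ac bc mA mB mC.
pose S i := if i == a then A else if i == b then B else C.
have -> : distribution P (v3 a b c) (A `*` B `*` C) =
    P (\bigcap_(i in [set` [:: a; b; c]]) eps i @^-1` S i).
  rewrite /distribution /pushforward; congr (P _).
  rewrite !bigcap_cons bigcap_nil setIT /S eqxx !(eq_sym _ a) (negbTE ab) (negbTE ac).
  rewrite eqxx eq_sym (negbTE bc).
  by apply/seteqP; split => w /=; tauto.
rewrite prodL /=; last 2 first.
- by rewrite !inE !negb_or ab ac bc.
- by move=> i; rewrite /S; case: ifP => _ //; case: ifP.
rewrite !big_cons big_nil mule1 /S eqxx !(eq_sym _ a) (negbTE ab) (negbTE ac).
by rewrite eqxx eq_sym (negbTE bc) muleA.
Qed.

Lemma rect4 a b c e A B C E : a != b -> a != c -> a != e -> b != c -> b != e -> c != e ->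
  measurable A -> measurable B -> measurable C -> measurable E ->
  distribution P (v4 a b c e) (A `*` B `*` C `*` E) = (mu A * mu B * mu C * mu E)%E.
Proof.
move=> ab ac ae bc be ce mA mB mC mE.
pose S i := if i == a then A else if i == b then B else if i == c then C else E.
have -> : distribution P (v4 a b c e) (A `*` B `*` C `*` E) =
    P (\bigcap_(i in [set` [:: a; b; c; e]]) eps i @^-1` S i).
  rewrite /distribution /pushforward; congr (P _).
  rewrite !bigcap_cons bigcap_nil setIT /S eqxx !(eq_sym _ a) (negbTE ab) (negbTE ac) (negbTE ae).
  rewrite eqxx !(eq_sym _ b) (negbTE bc) (negbTE be) eqxx eq_sym (negbTE ce).
  by apply/seteqP; split => w /=; tauto.
rewrite prodL /=; last 2 first.
- by rewrite !inE !negb_or ab ac ae bc be ce.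
- by move=> i; rewrite /S; case: ifP => _ //; case: ifP => _ //; case: ifP.
rewrite !big_cons big_nil mule1 /S eqxx !(eq_sym _ a) (negbTE ab) (negbTE ac) (negbTE ae).
by rewrite eqxx !(eq_sym _ b) (negbTE bc) (negbTE be) eqxx eq_sym (negbTE ce) !muleA.
Qed.

Let PT d' (U : measurableType d') (X : {mfun T >-> U}) : (distribution P X setT < +oo)%E.
Proof. by rewrite probability_setT ltry. Qed.

Lemma exch2 a b a' b' : a != b -> a' != b' -> forall X, measurable X ->
  distribution P (v2 a b) X = distribution P (v2 a' b') X.
Proof.
move=> ab ab'; apply: (@prod_unique _ _ R R R measurable).
- exact: measG.
- exact: measurableT.
- by move=> ? ? ? ?; exact: measurableI.
- exact: PT.
- by move=> A B mA mB; transitivity (mu A * mu B)%E; [exact: rect2|symmetry; exact: rect2].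
Qed.

Lemma exch3 a b c a' b' c' : a != b -> a != c -> b != c ->
  a' != b' -> a' != c' -> b' != c' -> forall X, measurable X ->
  distribution P (v3 a b c) X = distribution P (v3 a' b' c') X.
Proof.
move=> ab ac bc ab' ac' bc'.
apply: (@prod_unique _ _ (R * R)%type R R (@rectG _ _ R R measurable)).
- by apply: rectG_gen; [exact: measG|exact: measurableT].
- by apply: rectG_T; exact: measurableT.
- by apply: rectG_I => ? ? ? ?; exact: measurableI.
- exact: PT.
- move=> _ C [A [B [mA [mB ->]]]] mC.
  transitivity (mu A * mu B * mu C)%E; [exact: rect3|symmetry; exact: rect3].
Qed.

Lemma exch4 a b c e a' b' c' e' :
  a != b -> a != c -> a != e -> b != c -> b != e -> c != e ->
  a' != b' -> a' != c' -> a' != e' -> b' != c' -> b' != e' -> c' != e' ->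
  forall X, measurable X ->
  distribution P (v4 a b c e) X = distribution P (v4 a' b' c' e') X.
Proof.
move=> ab ac ae bc be ce ab' ac' ae' bc' be' ce'.
apply: (@prod_unique _ _ ((R * R) * R)%type R R (@rectG _ _ (R * R)%type R (@rectG _ _ R R measurable))).
- apply: rectG_gen; last by apply: rectG_T; exact: measurableT.
  by apply: rectG_gen; [exact: measG|exact: measurableT].
- by apply: rectG_T; apply: rectG_T; exact: measurableT.
- by apply: rectG_I; apply: rectG_I => ? ? ? ?; exact: measurableI.
- exact: PT.
- move=> _ E [_ [C [[A [B [mA [mB ->]]]] [mC ->]]]] mE.
  transitivity (mu A * mu B * mu C * mu E)%E; [exact: rect4|symmetry; exact: rect4].
Qed.


Lemma tie0 a b : a != b -> P [set w | eps a w = eps b w] = 0%E.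
Proof.
move=> ab.
have mD : measurable [set p : R * R | p.1 = p.2] by apply: meq.
have -> : [set w | eps a w = eps b w] = v2 a b @^-1` [set p : R * R | p.1 = p.2] by [].
have E := @product_measure_unique _ _ R R R mu mu (distribution P (v2 a b))
  (fun A B mA mB => rect2 a b A B ab mA mB) _ mD.
transitivity (distribution P (v2 a b) [set p : R * R | p.1 = p.2]); first by [].
rewrite -E.
rewrite /product_measure1.
have -> : (mu \o xsection [set p : R * R | p.1 = p.2]) = cst 0%E.
  apply/funext => x /=.
  have -> : xsection [set p : R * R | p.1 = p.2] x = [set x].
    by apply/seteqP; split => y; rewrite /xsection /= ?inE /= => ->.
  exact: Hc.
exact: integral0.
Qed.

Local Notation pr E := (fine (P E)).
Local Notation LT a b := [set w | eps a w < eps b w].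

Lemma mLT a b : measurable (LT a b).
Proof. by apply: mlt; exact: measurable_funPT. Qed.

Lemma finP (A : set T) : measurable A -> P A \is a fin_num.
Proof. by move=> mA; exact: fin_num_measure. Qed.

Lemma splitR (A : set T) b c : measurable A -> b != c ->
  pr A = pr (A `&` LT b c) + pr (A `&` LT c b).
Proof.
move=> mA bc.
have m1 := measurableI _ _ mA (mLT b c).
have m2 := measurableI _ _ mA (mLT c b).
have mt : measurable [set w | eps b w = eps c w] by apply: meq; exact: measurable_funPT.
have m3 := measurableI _ _ mA mt.
have E : A = ((A `&` LT b c) `|` (A `&` LT c b)) `|` (A `&` [set w | eps b w = eps c w]).
  apply/seteqP; split => [w Aw|w [[[]|[]]|[]]//].
  by case: (ltgtP (eps b w) (eps c w)) => h; [left; left|left; right|right].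
rewrite {1}E measureU //; last 2 first.
- exact: measurableU.
- apply/seteqP; split => // w [[[_ /= h]|[_ /= h]] [_ /= e]]; by rewrite e ltxx in h.
rewrite measureU //; last first.
  apply/seteqP; split => // w [[_ /= h1] [_ /= h2]].
  by have := lt_trans h1 h2; rewrite ltxx.
rewrite (@subset_measure0 _ _ _ P (A `&` [set w | eps b w = eps c w]) [set w | eps b w = eps c w]) //; last first.
- exact: tie0.
by rewrite ?adde0 ?addr0 fineD //; exact: finP.
Qed.

Lemma prT : pr setT = 1.
Proof. by rewrite probability_setT. Qed.

Let S2 := [set p : R * R | p.1 < p.2].
Let mS2 : measurable S2.
Proof. by apply: mlt; [exact: measurable_fst|exact: measurable_snd]. Qed.

Let Smax := [set p : (R * R) * R | p.1.1 < p.1.2 /\ p.2 < p.1.2].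
Let mSmax : measurable Smax.
Proof.
have m11 : measurable_fun setT (fun p : (R * R) * R => p.1.1) :=
  measurableT_comp measurable_fst measurable_fst.
have m12 : measurable_fun setT (fun p : (R * R) * R => p.1.2) :=
  measurableT_comp measurable_snd measurable_fst.
apply: (@measurableI _ _ [set p : (R * R) * R | p.1.1 < p.1.2] [set p | p.2 < p.1.2]).
- exact: mlt.
- by apply: mlt => //; exact: measurable_snd.
Qed.

Let S4 := [set p : ((R * R) * R) * R | p.1.1.1 < p.1.1.2 /\ p.1.2 < p.2].
Let mS4 : measurable S4.
Proof.
have m111 : measurable_fun setT (fun p : ((R * R) * R) * R => p.1.1.1) :=
  measurableT_comp measurable_fst (measurableT_comp measurable_fst measurable_fst).
have m112 : measurable_fun setT (fun p : ((R * R) * R) * R => p.1.1.2) :=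
  measurableT_comp measurable_snd (measurableT_comp measurable_fst measurable_fst).
have m12 : measurable_fun setT (fun p : ((R * R) * R) * R => p.1.2) :=
  measurableT_comp measurable_snd measurable_fst.
apply: (@measurableI _ _ [set p : ((R * R) * R) * R | p.1.1.1 < p.1.1.2] [set p | p.1.2 < p.2]).
- exact: mlt.
- by apply: mlt => //; exact: measurable_snd.
Qed.

Lemma half a b : a != b -> pr (LT a b) = 1 / 2.
Proof.
move=> ab.
have := splitR setT a b measurableT ab; rewrite prT !setTI.
have -> : pr (LT b a) = pr (LT a b).
  congr fine; change (distribution P (v2 b a) S2 = distribution P (v2 a b) S2).
  by apply: exch2 => //; rewrite eq_sym.
lra.
Qed.

Lemma third_max a b c : a != b -> a != c -> b != c ->
  pr (LT a b `&` LT c b) = 1 / 3.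
Proof.
move=> ab ac bc.
have ba : b != a by rewrite eq_sym.
have ca : c != a by rewrite eq_sym.
have cb : c != b by rewrite eq_sym.
have E1 := splitR setT a b measurableT ab; rewrite prT !setTI in E1.
have E2 := splitR (LT a b) c b (mLT a b) cb.
have E3 := splitR (LT b a) c a (mLT b a) ca.
have E4 := splitR (LT a c `&` LT b c) a b (measurableI _ _ (mLT a c) (mLT b c)) ab.
have G1 : (LT a c `&` LT b c) `&` LT a b = LT a b `&` LT b c.
  apply/seteqP; split => w /=; first tauto.
  by move=> [h1 h2]; split => //; split => //; exact: lt_trans h1 h2.
have G2 : (LT a c `&` LT b c) `&` LT b a = LT b a `&` LT a c.
  apply/seteqP; split => w /=; first tauto.
  by move=> [h1 h2]; split => //; split => //; exact: lt_trans h1 h2.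
rewrite G1 G2 in E4.
have F1 : pr (LT b a `&` LT c a) = pr (LT a b `&` LT c b).
  congr fine; change (distribution P (v3 b a c) Smax = distribution P (v3 a b c) Smax).
  exact: exch3.
have F2 : pr (LT a c `&` LT b c) = pr (LT a b `&` LT c b).
  congr fine; change (distribution P (v3 a c b) Smax = distribution P (v3 a b c) Smax).
  exact: exch3.
lra.
Qed.

Lemma sixth a b c : a != b -> a != c -> b != c ->
  pr (LT a b `&` LT b c) = 1 / 6.
Proof.
move=> ab ac bc.
have cb : c != b by rewrite eq_sym.
have := splitR (LT a b) c b (mLT a b) cb; rewrite half // third_max //; lra.
Qed.

Lemma third_min a b c : a != b -> a != c -> b != c ->
  pr (LT b a `&` LT b c) = 1 / 3.
Proof.
move=> ab ac bc.
have cb : c != b by rewrite eq_sym.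
have ba : b != a by rewrite eq_sym.
have ca : c != a by rewrite eq_sym.
have := splitR (LT b a) c b (mLT b a) cb; rewrite half //.
rewrite [LT b a `&` LT c b]setIC sixth //; lra.
Qed.

Lemma quarter a b c e : a != b -> a != c -> a != e -> b != c -> b != e -> c != e ->
  pr (LT a b `&` LT c e) = 1 / 4.
Proof.
move=> ab ac ae bc be ce.
have ba : b != a by rewrite eq_sym.
have ec : e != c by rewrite eq_sym.
have E1 := splitR setT a b measurableT ab; rewrite prT !setTI in E1.
have E2 := splitR (LT a b) c e (mLT a b) ce.
have E3 := splitR (LT b a) c e (mLT b a) ce.
have F1 : pr (LT b a `&` LT c e) = pr (LT a b `&` LT c e).
  congr fine; change (distribution P (v4 b a c e) S4 = distribution P (v4 a b c e) S4).
  by apply: exch4; rewrite // eq_sym.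
have F2 : pr (LT a b `&` LT e c) = pr (LT a b `&` LT c e).
  congr fine; change (distribution P (v4 a b e c) S4 = distribution P (v4 a b c e) S4).
  by apply: exch4; rewrite // eq_sym.
have F3 : pr (LT b a `&` LT e c) = pr (LT a b `&` LT c e).
  congr fine; change (distribution P (v4 b a e c) S4 = distribution P (v4 a b c e) S4).
  by apply: exch4; rewrite // eq_sym.
lra.
Qed.

Lemma MAdiff q t w :
  MAeq eps q (t + 1) w - MAeq eps q t w = eps (t + 1) w - eps (t - q%:Z) w.
Proof.
rewrite /MAeq [X in X - _]big_nat_recl // [X in _ - X]big_nat_recr //=.
have -> : \sum_(0 <= i < q) eps (t + 1 - i.+1%:Z) w = \sum_(0 <= i < q) eps (t - i%:Z) w.
  by apply: eq_bigr => i _; congr (eps _ w); lia.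
have -> : t + 1 - 0%:Z = t + 1 by lia.
ring.
Qed.

Lemma OPE q t (i : 'I_2) : OPevent (MAeq eps q) t i =
  if i == ord0 then LT (t - q%:Z) (t + 1) else LT (t + 1) (t - q%:Z).
Proof.
rewrite /OPevent; case: ifP => _; apply/funext => w /=.
- by rewrite -subr_gt0 MAdiff subr_gt0.
- by rewrite -subr_lt0 MAdiff subr_lt0.
Qed.

Lemma pE q (i : 'I_2) : p_ P (MAeq eps q) i = 1 / 2.
Proof. by rewrite /p_ OPE; case: ifP => _; apply: half; apply/eqP; lia. Qed.

Lemma p2E q (i j : 'I_2) (k : nat) : (0 < k)%N -> p2_ P (MAeq eps q) i j k =
  if k == q.+1 then
    (if i == ord0 then (if j == ord0 then 1 / 6 else 1 / 3)
     else (if j == ord0 then 1 / 3 else 1 / 6))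
  else 1 / 4.
Proof.
move=> k0; rewrite /p2_ !OPE.
have [->|/negbTE kq] := eqVneq k q.+1; rewrite ?eqxx ?kq; last move/negbT/eqP: kq => kq.
  have e1 : (q.+1)%:Z - q%:Z = 0 + 1 by lia.
  rewrite e1; case: (i == ord0); case: (j == ord0).
  - by rewrite sixth //; apply/eqP; lia.
  - by rewrite third_max //; apply/eqP; lia.
  - by rewrite third_min //; apply/eqP; lia.
  - by rewrite setIC sixth //; apply/eqP; lia.
by case: (i == ord0); case: (j == ord0); rewrite quarter //; apply/eqP; lia.
Qed.

Lemma termE q (i j : 'I_2) (k : nat) : (0 < k)%N ->
  p2_ P (MAeq eps q) i j k + p2_ P (MAeq eps q) j i k
    - 2 * p_ P (MAeq eps q) i * p_ P (MAeq eps q) j =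
  if k == q.+1 then (if i == j then - 1 / 6 else 1 / 6) else 0.
Proof.
move=> k0; rewrite !p2E // !pE.
case: (k == q.+1); last lra.
by case: i => -[|[|?]] //= ?; case: j => -[|[|?]] //= ?; lra.
Qed.

End prob.

Lemma sum_single (R : realType) (q : nat) (s : R) n :
  \sum_(1 <= k < n.+1) (if k == q.+1 then s else 0) = if (q.+1 <= n)%N then s else 0.
Proof.
elim: n => [|n IH]; first by rewrite big_geq.
rewrite big_nat_recr //= IH eqSS.
have [h|h|h] := ltngtP q n.
- by rewrite addr0 ltnS (ltnW h).
- by rewrite addr0 ltnS leqNgt h.
- by rewrite add0r h ltnSn.
Qed.


Theorem proposition3p1 (d : measure_display) (T : measurableType d)
  (R : realType) (P : probability T R) (eps : int -> {RV P >-> R}) (q : nat) :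
  iid_continuous eps ->
  forall i j : 'I_2,
    sigma_partial P (MAeq eps q) i j n @[n --> \oo] --> (Sigma_claim R i j : R^o).
Proof.
move=> [Hind Hid Hc] i j.
apply: (@cvg_near_cst nat R^o); exists q.+1 => // n /= Hn.
rewrite /sigma_partial.
rewrite (eq_big_nat _ _ (F2 := fun k => if k == q.+1 then (if i == j then - 1 / 6 else 1 / 6) else 0)); last first.
  by move=> k /andP[k1 _]; exact: termE.
rewrite sum_single Hn !pE // /Sigma_claim.
by case: (i == j) => /=; lra.
Qed.
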